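(* Let $D^k$ be a vertically mapped wedge with $J^k>0$. Let $E$ be an edge of $\widehat T$ with affine parametrization $\gamma:[0,1]\to E$, and let $f=\bm\Phi^k(E\times[0,1])$ be the corresponding quadrilateral face, parametrized by $\bm X(u,t)=\bm\Phi^k(\gamma(u),t)$, $(u,t)\in[0,1]^2$, with surface Jacobian $J^k_f(u,t)=|\partial_u\bm X\times\partial_t\bm X|$. Then $f$ is planar with constant unit normal, and $J^k_f$ is independent of $t$ and affine in $u$. Moreover the face mass matrix $(\bm M^k_f)_{ij,i'j'}=\int_0^1\!\int_0^1\ell_{ij}(\bm X(u,t))\ell_{i'j'}(\bm X(u,t))J^k_f\,du\,dt$ (with $\ell_{ij}$ evaluated at reference coordinates $(\gamma(u),t)$) satisfies $$\bm M^k_f=\widetilde{\bm M}^{\mathrm{tri},k}_{\mathrm{edge}}\otimes\widehat{\bm M}^{\mathrm{1D}},\qquad (\widetilde{\bm M}^{\mathrm{tri},k}_{\mathrm{edge}})_{ii'}=\int_0^1\ell^{\mathrm{tri}}_i(\gamma(u))\ell^{\mathrm{tri}}_{i'}(\gamma(u))J^k_f(u)\,du,$$ and consequently the lift matrix is $$\bm L^k_f:=(\bm M^k)^{-1}\bm M^k_f=\big((\bm M^{\mathrm{tri},k})^{-1}\widetilde{\bm M}^{\mathrm{tri},k}_{\mathrm{edge}}\big)\otimes\bm I_{N+1},$$ which is block diagonal with respect to the index $j$ (i.e. $(\bm L^k_f)_{ij,i'j'}=0$ whenever $j\neq j'$).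
   Context: Reference wedge $\widehat W=\widehat T\times[0,1]$ with $\widehat T=\{(r,s):r,s\ge0,\ r+s\le1\}$. Vertex functions $v_1=(1-r-s)(1-t)$, $v_2=r(1-t)$, $v_3=s(1-t)$, $v_4=(1-r-s)t$, $v_5=rt$, $v_6=st$; a wedge $D^k$ is the image of $\widehat W$ under $\bm{\Phi}^k=\sum_{i=1}^6\bm{\nu}_iv_i$ with vertices $\bm{\nu}_i\in\mathbb{R}^3$, and $J^k=\det[\partial_r\bm{\Phi}^k,\partial_s\bm{\Phi}^k,\partial_t\bm{\Phi}^k]$. It is vertically mapped if the pairs $(\bm{\nu}_1,\bm{\nu}_4)$, $(\bm{\nu}_2,\bm{\nu}_5)$, $(\bm{\nu}_3,\bm{\nu}_6)$ each have identical $x$- and $y$-coordinates. Nodal basis: fix $N\ge1$, points $(r_i,s_i)$, $i=1,\dots,(N+1)(N+2)/2$, in $\widehat T$ unisolvent for polynomials of total degree $\le N$ with Lagrange basis $\ell^{\mathrm{tri}}_i$, and Gauss–Legendre–Lobatto points $0=t_0<\dots<t_N=1$ with Lagrange basis $\ell^{\mathrm{1D}}_j$; $\ell_{ij}=\ell^{\mathrm{tri}}_i(r,s)\ell^{\mathrm{1D}}_j(t)$. Matrices indexed by $(i,j)$ are ordered with $i$ the slow index, so $(\bm A\otimes\bm B)_{ij,i'j'}=\bm A_{ii'}\bm B_{jj'}$. Definitions: $(\bm M^k)_{ij,i'j'}=\int_{\widehat W}\ell_{ij}\ell_{i'j'}J^k$; $(\bm M^{\mathrm{tri},k})_{ii'}=\int_{\widehat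 T}\ell^{\mathrm{tri}}_i\ell^{\mathrm{tri}}_{i'}J^k(r,s)$ (where $J^k$ is independent of $t$ for vertically mapped wedges); $(\widehat{\bm M}^{\mathrm{1D}})_{jj'}=\int_0^1\ell^{\mathrm{1D}}_j\ell^{\mathrm{1D}}_{j'}$; $\bm I_{N+1}$ is the $(N+1)\times(N+1)$ identity. *)

(* Defs.v *)
From Stdlib Require Import Reals Lra ClassicalEpsilon.
Open Scope R_scope.

Record V3 := mkV3 { vx : R; vy : R; vz : R }.
Definition vadd (a b : V3) : V3 := mkV3 (vx a + vx b) (vy a + vy b) (vz a + vz b).
Definition vsub (a b : V3) : V3 := mkV3 (vx a - vx b) (vy a - vy b) (vz a - vz b).
Definition vscal (c : R) (a : V3) : V3 := mkV3 (c * vx a) (c * vy a) (c * vz a).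
Definition dot (a b : V3) : R := vx a * vx b + vy a * vy b + vz a * vz b.
Definition cross (a b : V3) : V3 :=
  mkV3 (vy a * vz b - vz a * vy b) (vz a * vx b - vx a * vz b) (vx a * vy b - vy a * vx b).
Definition vnorm (a : V3) : R := sqrt (dot a a).
Definition det3 (a b c : V3) : R := dot a (cross b c).

Definition vderiv (F : R -> V3) (x : R) (d : V3) : Prop :=
  derivable_pt_lim (fun y => vx (F y)) x (vx d) /\
  derivable_pt_lim (fun y => vy (F y)) x (vy d) /\
  derivable_pt_lim (fun y => vz (F y)) x (vz d).

Fixpoint rsum (n : nat) (f : nat -> R) : R :=
  match n with O => 0 | S m => rsum m f + f m end.
Fixpoint rprod (n : nat) (f : nat -> R) : R :=
  match n with O => 1 | S m => rprod m f * f m end.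

(* The Riemann integral of f over [a,b] (a canonical value; meaningful when
   f is Riemann integrable, which is the case for all integrands below). *)
Definition RInt (f : R -> R) (a b : R) : R :=
  epsilon (inhabits 0) (fun v => exists pr : Riemann_integrable f a b, RiemannInt pr = v).
Definition TriInt (g : R -> R -> R) : R :=
  RInt (fun r => RInt (fun s => g r s) 0 (1 - r)) 0 1.
Definition WedgeInt (g : R -> R -> R -> R) : R :=
  RInt (fun t => TriInt (fun r s => g r s t)) 0 1.

Definition in_tri (r s : R) : Prop := 0 <= r /\ 0 <= s /\ r + s <= 1.
Definition in_wedge (r s t : R) : Prop := in_tri r s /\ 0 <= t <= 1.

Definition vfun (i : nat) (r s t : R) : R :=
  match i with
  | 1%nat => (1 - r - s) * (1 - t)
  | 2%nat => r * (1 - t)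
  | 3%nat => s * (1 - t)
  | 4%nat => (1 - r - s) * t
  | 5%nat => r * t
  | 6%nat => s * t
  | _ => 0
  end.

Definition Phi (nu : nat -> V3) (r s t : R) : V3 :=
  vadd (vscal (vfun 1 r s t) (nu 1%nat))
  (vadd (vscal (vfun 2 r s t) (nu 2%nat))
  (vadd (vscal (vfun 3 r s t) (nu 3%nat))
  (vadd (vscal (vfun 4 r s t) (nu 4%nat))
  (vadd (vscal (vfun 5 r s t) (nu 5%nat))
        (vscal (vfun 6 r s t) (nu 6%nat)))))).

Definition vertically_mapped (nu : nat -> V3) : Prop :=
  vx (nu 1%nat) = vx (nu 4%nat) /\ vy (nu 1%nat) = vy (nu 4%nat) /\
  vx (nu 2%nat) = vx (nu 5%nat) /\ vy (nu 2%nat) = vy (nu 5%nat) /\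
  vx (nu 3%nat) = vx (nu 6%nat) /\ vy (nu 3%nat) = vy (nu 6%nat).

Definition is_partials (nu : nat -> V3) (dr ds dt : R -> R -> R -> V3) : Prop :=
  forall r s t,
    vderiv (fun x => Phi nu x s t) r (dr r s t) /\
    vderiv (fun x => Phi nu r x t) s (ds r s t) /\
    vderiv (fun x => Phi nu r s x) t (dt r s t).

Definition Jac (dr ds dt : R -> R -> R -> V3) (r s t : R) : R :=
  det3 (dr r s t) (ds r s t) (dt r s t).

(* number of triangle nodes (N+1)(N+2)/2 ; triangle nodes indexed 0..Np-1 *)
Definition Np (N : nat) : nat := Nat.div ((N + 1) * (N + 2)) 2.

Definition poly2_deg_le (N : nat) (g : R -> R -> R) : Prop :=
  exists c : nat -> nat -> R, forall r s,
    g r s = rsum (S N) (fun a => rsum (S N - a) (fun b => c a b * r ^ a * s ^ b)).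

(* ltri i (i < Np N) is the Lagrange basis of P_N(T) for the nodes (rn i, sn i)
   in T; existence of such a basis is equivalent to unisolvence of the nodes. *)
Definition is_tri_lagrange (N : nat) (rn sn : nat -> R) (ltri : nat -> R -> R -> R) : Prop :=
  (forall i, (i < Np N)%nat -> in_tri (rn i) (sn i)) /\
  (forall i, (i < Np N)%nat -> poly2_deg_le N (ltri i)) /\
  (forall i i', (i < Np N)%nat -> (i' < Np N)%nat ->
      ltri i (rn i') (sn i') = if Nat.eqb i i' then 1 else 0).

(* Legendre polynomials via Bonnet's recursion: legpair n x = (P_n x, P_{n+1} x) *)
Fixpoint legpair (n : nat) (x : R) : R * R :=
  match n with
  | O => (1, x)
  | S m => let (a, b) := legpair m x in
           (b, ((2 * INR m + 3) * x * b - (INR m + 1) * a) / (INR m + 2))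
  end.
Definition Leg (n : nat) (x : R) : R := fst (legpair n x).

(* t_0 < ... < t_N are the Gauss-Legendre-Lobatto points mapped to [0,1]:
   the endpoints together with the roots of P_N'(2t-1). *)
Definition is_GLL (N : nat) (t : nat -> R) : Prop :=
  t O = 0 /\ t N = 1 /\
  (forall j, (j < N)%nat -> t j < t (S j)) /\
  (forall j, (0 < j)%nat -> (j < N)%nat -> derivable_pt_lim (Leg N) (2 * t j - 1) 0).

Definition lag1D (N : nat) (t : nat -> R) (j : nat) (x : R) : R :=
  rprod (S N) (fun m => if Nat.eqb m j then 1 else (x - t m) / (t j - t m)).

Definition tri_vr (a : nat) : R := match a with 1%nat => 1 | _ => 0 end.
Definition tri_vs (a : nat) : R := match a with 2%nat => 1 | _ => 0 end.
(* vertices 0:(0,0), 1:(1,0), 2:(0,1); the edge from vertex a to vertex b is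
   parametrized affinely by gamma(u) = va + u (vb - va) *)
Definition gam_r (a b : nat) (u : R) : R := tri_vr a + u * (tri_vr b - tri_vr a).
Definition gam_s (a b : nat) (u : R) : R := tri_vs a + u * (tri_vs b - tri_vs a).

Definition Xf (nu : nat -> V3) (a b : nat) (u t : R) : V3 :=
  Phi nu (gam_r a b u) (gam_s a b u) t.

Definition is_face_partials (nu : nat -> V3) (a b : nat) (dXu dXt : R -> R -> V3) : Prop :=
  forall u t, vderiv (fun x => Xf nu a b x t) u (dXu u t) /\
              vderiv (fun x => Xf nu a b u x) t (dXt u t).

Definition face_jac (dXu dXt : R -> R -> V3) (u t : R) : R :=
  vnorm (cross (dXu u t) (dXt u t)).

Definition mat2 := (nat * nat) -> (nat * nat) -> R.
Definition mat := nat -> nat -> R.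

Definition kron (A B : mat) : mat2 := fun p q => A (fst p) (fst q) * B (snd p) (snd q).
Definition idm : mat := fun j j' => if Nat.eqb j j' then 1 else 0.
Definition mulmx (n : nat) (A B : mat) : mat := fun i k => rsum n (fun m => A i m * B m k).
Definition is_inv (n : nat) (A B : mat) : Prop :=
  forall i k, (i < n)%nat -> (k < n)%nat -> mulmx n A B i k = idm i k /\ mulmx n B A i k = idm i k.
Definition mulmx2 (n1 n2 : nat) (A B : mat2) : mat2 :=
  fun p q => rsum n1 (fun i => rsum n2 (fun j => A p (i, j) * B (i, j) q)).
Definition idm2 : mat2 := fun p q => idm (fst p) (fst q) * idm (snd p) (snd q).
Definition in_range2 (n1 n2 : nat) (p : nat * nat) : Prop := (fst p < n1)%nat /\ (snd p < n2)%nat.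
Definition is_inv2 (n1 n2 : nat) (A B : mat2) : Prop :=
  forall p q, in_range2 n1 n2 p -> in_range2 n1 n2 q ->
    mulmx2 n1 n2 A B p q = idm2 p q /\ mulmx2 n1 n2 B A p q = idm2 p q.

Definition Mk (N : nat) (ltri : nat -> R -> R -> R) (tg : nat -> R) (J : R -> R -> R -> R) : mat2 :=
  fun p q => WedgeInt (fun r s t =>
    ltri (fst p) r s * lag1D N tg (snd p) t * (ltri (fst q) r s * lag1D N tg (snd q) t) * J r s t).

(* J^k is independent of t for vertically mapped wedges; we evaluate it at t = 0 *)
Definition Mtri (ltri : nat -> R -> R -> R) (J : R -> R -> R -> R) : mat :=
  fun i i' => TriInt (fun r s => ltri i r s * ltri i' r s * J r s 0).

Definition M1D (N : nat) (tg : nat -> R) : mat :=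
  fun j j' => RInt (fun t => lag1D N tg j t * lag1D N tg j' t) 0 1.

Definition Mface (N : nat) (ltri : nat -> R -> R -> R) (tg : nat -> R) (a b : nat)
    (Jf : R -> R -> R) : mat2 :=
  fun p q => RInt (fun t => RInt (fun u =>
     ltri (fst p) (gam_r a b u) (gam_s a b u) * lag1D N tg (snd p) t *
     (ltri (fst q) (gam_r a b u) (gam_s a b u) * lag1D N tg (snd q) t) * Jf u t) 0 1) 0 1.

(* J_f is independent of t; we evaluate it at t = 0 *)
Definition Medge (ltri : nat -> R -> R -> R) (a b : nat) (Jf : R -> R -> R) : mat :=
  fun i i' => RInt (fun u =>
     ltri i (gam_r a b u) (gam_s a b u) * ltri i' (gam_r a b u) (gam_s a b u) * Jf u 0) 0 1.

(* Main.v *)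
Require Import Defs.
From Stdlib Require Import Reals.
Open Scope R_scope.
Definition PD (n : nat) (A : mat) : Prop :=
  forall c : nat -> R, (exists i, (i < n)%nat /\ c i <> 0) ->
     0 < rsum n (fun i => rsum n (fun i' => c i * A i i' * c i')).
Module Bridge.
From mathcomp Require Import all_boot all_algebra.
From mathcomp Require Import Rstruct.
From Stdlib Require Import Classical.
Import GRing.Theory.
Local Open Scope ring_scope.

Lemma rsum_big (n : nat) (f : nat -> R) : rsum n f = (\sum_(i < n) f i).
Proof.
elim: n => [|n IH]; first by rewrite big_ord0.
by rewrite big_ord_recr /= IH.
Qed.

Lemma pd_inv (n : nat) (A : mat) : PD n A -> exists B, is_inv n A B.
Proof.
case: n => [|m] Hpd.
  by exists A => i k /leP.
set Am := (\matrix_(i < m.+1, j < m.+1) A i j : 'M[R]_m.+1).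
have Hdet : \det Am != 0.
  apply/negP => /det0P [v vnz vA].
  have [j Hj] : exists j, v ord0 j <> 0.
    apply/not_all_not_ex => Hall; move/negP: vnz; apply.
    apply/eqP/rowP => k; rewrite mxE.
    by case: (eqVneq (v ord0 k) 0) => // /eqP /Hall.
  set c := fun i : nat => v ord0 (inord i).
  have Hc : exists i, (i < m.+1)%coq_nat /\ c i <> 0.
    exists j; split; first by apply/ltP.
    by rewrite /c inord_val.
  move: (Hpd c Hc); rewrite rsum_big.
  have -> : (\sum_(i < m.+1) rsum m.+1 (fun i' => c i * A i i' * c i')) = 0.
    under eq_bigr => i _ do rewrite rsum_big.
    rewrite exchange_big /=.
    apply: big1 => i' _.
    rewrite -mulr_suml.
    have -> : \sum_(i < m.+1) c i * A i i' = (v *m Am) ord0 i'.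
      rewrite mxE; apply: eq_bigr => i _.
      by rewrite /c !mxE inord_val.
    by rewrite vA mxE mul0r.
  by move/RIneq.Rlt_irrefl.
exists (fun i k => invmx Am (inord i) (inord k)) => i k /ltP Hi /ltP Hk.
have Hid : forall (M N : 'M[R]_m.+1), M *m N = 1%:M ->
   Defs.mulmx m.+1 (fun i k => M (inord i) (inord k)) (fun i k => N (inord i) (inord k)) i k = idm i k.
  move=> M N HMN.
  rewrite /Defs.mulmx rsum_big.
  have -> : \sum_(j < m.+1) M (inord i) (inord j) * N (inord j) (inord k) = (M *m N) (inord i) (inord k).
    by rewrite mxE; apply: eq_bigr => j _; rewrite inord_val.
  rewrite HMN mxE /idm.
  case: (PeanoNat.Nat.eqb_spec i k) => [->|Hne]; first by rewrite eqxx.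
  case: eqP => // /(congr1 val); rewrite /= !inordK //.
have HA : forall j, (j < m.+1)%N -> A i j = Am (inord i) (inord j)
  /\ A j k = Am (inord j) (inord k).
  by move=> j Hj; rewrite !mxE !inordK.
have Hu : Am \in unitmx by rewrite unitmxE unitfE.
split.
  rewrite -(Hid Am (invmx Am)); last by rewrite mulmxV.
  rewrite /Defs.mulmx !rsum_big; apply: eq_bigr => j _.
  by rewrite (proj1 (HA j (ltn_ord j))).
rewrite -(Hid (invmx Am) Am); last by rewrite mulVmx.
rewrite /Defs.mulmx !rsum_big; apply: eq_bigr => j _.
by rewrite (proj2 (HA j (ltn_ord j))).
Qed.
End Bridge.

From Coquelicot Require Import Coquelicot.
Require Import Defs.
From Stdlib Require Import Reals Lra Lia FunctionalExtensionality ClassicalEpsilon List.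
Open Scope R_scope.

Lemma rsum_ext n f g : (forall i, (i < n)%nat -> f i = g i) -> rsum n f = rsum n g.
Proof. induction n; intros H; simpl; [reflexivity|]. rewrite IHn by (intros; apply H; lia). rewrite H by lia. reflexivity. Qed.
Lemma rsum_plus n f g : rsum n (fun i => f i + g i) = rsum n f + rsum n g.
Proof. induction n; simpl; [ring|]. rewrite IHn. ring. Qed.
Lemma rsum_scal_l n c f : rsum n (fun i => c * f i) = c * rsum n f.
Proof. induction n; simpl; [ring|]. rewrite IHn. ring. Qed.
Lemma rsum_scal_r n c f : rsum n (fun i => f i * c) = rsum n f * c.
Proof. induction n; simpl; [ring|]. rewrite IHn. ring. Qed.
Lemma rsum_zero n f : (forall i, (i < n)%nat -> f i = 0) -> rsum n f = 0.
Proof. intros H. rewrite (rsum_ext n f (fun _ => 0)) by auto. induction n; simpl; [ring|]. rewrite IHn; [ring|]. intros; auto. Qed.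
Lemma rsum_swap n m (f : nat -> nat -> R) :
  rsum n (fun i => rsum m (fun j => f i j)) = rsum m (fun j => rsum n (fun i => f i j)).
Proof. induction n; simpl.
- symmetry; apply rsum_zero; auto.
- rewrite IHn. rewrite <- rsum_plus. reflexivity. Qed.
Lemma rsum_delta_l n i0 f : (i0 < n)%nat -> rsum n (fun i => idm i0 i * f i) = f i0.
Proof. induction n; intros H; [lia|]. simpl. unfold idm at 2.
  destruct (PeanoNat.Nat.eqb_spec i0 n).
  - subst. rewrite rsum_zero. ring. intros i Hi. unfold idm.
    destruct (PeanoNat.Nat.eqb_spec n i); [lia|ring].
  - rewrite IHn by lia. ring. Qed.
Lemma rsum_delta_r n i0 f : (i0 < n)%nat -> rsum n (fun i => f i * idm i i0) = f i0.
Proof. intros H. rewrite <- (rsum_delta_l n i0 f H). apply rsum_ext. intros i _.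
  unfold idm. destruct (PeanoNat.Nat.eqb_spec i i0); destruct (PeanoNat.Nat.eqb_spec i0 i); try lia; ring. Qed.

Definition S2 n m (F : nat * nat -> R) := rsum n (fun i => rsum m (fun j => F (i, j))).
Lemma S2_ext n m F G : (forall x, in_range2 n m x -> F x = G x) -> S2 n m F = S2 n m G.
Proof. intros H. unfold S2. apply rsum_ext; intros. apply rsum_ext; intros. apply H. split; simpl; auto. Qed.
Lemma S2_scal_l n m c F : S2 n m (fun x => c * F x) = c * S2 n m F.
Proof. unfold S2. rewrite <- rsum_scal_l. apply rsum_ext; intros. apply rsum_scal_l. Qed.
Lemma S2_scal_r n m c F : S2 n m (fun x => F x * c) = S2 n m F * c.
Proof. unfold S2. rewrite <- rsum_scal_r. apply rsum_ext; intros. apply rsum_scal_r. Qed.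
Lemma S2_swap n m (F : nat * nat -> nat * nat -> R) :
  S2 n m (fun x => S2 n m (fun y => F x y)) = S2 n m (fun y => S2 n m (fun x => F x y)).
Proof. unfold S2.
  transitivity (rsum n (fun i => rsum n (fun k => rsum m (fun j => rsum m (fun l => F (i,j) (k,l)))))).
  { apply rsum_ext; intros. rewrite rsum_swap. reflexivity. }
  rewrite rsum_swap. apply rsum_ext; intros k _.
  transitivity (rsum n (fun i => rsum m (fun l => rsum m (fun j => F (i,j) (k,l))))).
  { apply rsum_ext; intros. apply rsum_swap. }
  apply rsum_swap. Qed.
Lemma S2_delta_l n m p F : in_range2 n m p -> S2 n m (fun x => idm2 p x * F x) = F p.
Proof. intros [H1 H2]. unfold S2, idm2. simpl.
  transitivity (rsum n (fun i => idm (fst p) i * rsum m (fun j => idm (snd p) j * F (i,j)))).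
  { apply rsum_ext; intros. rewrite <- rsum_scal_l. apply rsum_ext; intros; ring. }
  rewrite rsum_delta_l by auto. rewrite rsum_delta_l by auto. destruct p; reflexivity. Qed.
Lemma S2_delta_r n m p F : in_range2 n m p -> S2 n m (fun x => F x * idm2 x p) = F p.
Proof. intros H. rewrite <- (S2_delta_l n m p F H). apply S2_ext. intros [i j] _.
  unfold idm2, idm; simpl.
  destruct (PeanoNat.Nat.eqb_spec i (fst p)); destruct (PeanoNat.Nat.eqb_spec (fst p) i); try lia;
  destruct (PeanoNat.Nat.eqb_spec j (snd p)); destruct (PeanoNat.Nat.eqb_spec (snd p) j); try lia; ring. Qed.

Lemma mulmx2_S2 n m A B p q : mulmx2 n m A B p q = S2 n m (fun x => A p x * B x q).
Proof. reflexivity. Qed.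

Lemma mulmx2_kron n m A1 A2 B1 B2 p q :
  mulmx2 n m (kron A1 A2) (kron B1 B2) p q = mulmx n A1 B1 (fst p) (fst q) * mulmx m A2 B2 (snd p) (snd q).
Proof. unfold mulmx2, mulmx, kron. simpl. rewrite <- rsum_scal_r. apply rsum_ext; intros i _.
  rewrite <- rsum_scal_l. apply rsum_ext; intros j _. ring. Qed.

Lemma lift_main n m (Mk Mf : mat2) (A B E : mat) :
  (forall p q, in_range2 n m p -> in_range2 n m q -> Mk p q = kron A B p q) ->
  (forall p q, in_range2 n m p -> in_range2 n m q -> Mf p q = kron E B p q) ->
  (exists Binv, is_inv m B Binv) ->
  forall Minv Tinv, is_inv2 n m Mk Minv -> is_inv n A Tinv ->
  forall p q, in_range2 n m p -> in_range2 n m q ->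
    mulmx2 n m Minv Mf p q = kron (mulmx n Tinv E) idm p q.
Proof.
  intros HMk HMf [Binv HB] Minv Tinv HMinv HT.
  set (K := kron Tinv Binv).
  assert (HMK : forall x q, in_range2 n m x -> in_range2 n m q -> mulmx2 n m Mk K x q = idm2 x q).
  { intros x q Hx Hq. rewrite mulmx2_S2.
    transitivity (mulmx2 n m (kron A B) K x q).
    { rewrite mulmx2_S2. apply S2_ext. intros y Hy. rewrite HMk by auto. reflexivity. }
    unfold K. rewrite mulmx2_kron. unfold idm2.
    destruct Hx, Hq. rewrite (proj1 (HT _ _ H H1)). rewrite (proj1 (HB _ _ H0 H2)). reflexivity. }
  assert (HMe : forall p q, in_range2 n m p -> in_range2 n m q -> Minv p q = K p q).
  { intros p q Hp Hq.
    rewrite <- (S2_delta_r n m q (fun x => Minv p x)) by auto.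
    transitivity (S2 n m (fun x => Minv p x * S2 n m (fun y => Mk x y * K y q))).
    { apply S2_ext. intros x Hx. rewrite <- (HMK x q) by auto. reflexivity. }
    transitivity (S2 n m (fun x => S2 n m (fun y => Minv p x * Mk x y * K y q))).
    { apply S2_ext. intros x Hx. rewrite <- S2_scal_l. apply S2_ext; intros; ring. }
    rewrite S2_swap.
    transitivity (S2 n m (fun y => idm2 p y * K y q)).
    { apply S2_ext. intros y Hy. rewrite S2_scal_r. rewrite <- (proj2 (HMinv p y Hp Hy)). reflexivity. }
    apply (S2_delta_l n m p (fun y => K y q)); auto. }
  intros p q Hp Hq. rewrite mulmx2_S2.
  transitivity (mulmx2 n m K (kron E B) p q).
  { rewrite mulmx2_S2. apply S2_ext. intros x Hx. rewrite HMe, HMf by auto. reflexivity. }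
  unfold K. rewrite mulmx2_kron. unfold kron.
  destruct Hp, Hq. rewrite (proj2 (HB _ _ H0 H2)). reflexivity.
Qed.

Lemma kron_inv n m (Mk : mat2) (A B : mat) :
  (forall p q, in_range2 n m p -> in_range2 n m q -> Mk p q = kron A B p q) ->
  (exists Ainv, is_inv n A Ainv) -> (exists Binv, is_inv m B Binv) ->
  exists Minv, is_inv2 n m Mk Minv.
Proof.
  intros HMk [Ai HA] [Bi HB]. exists (kron Ai Bi). intros p q Hp Hq.
  destruct Hp as [Hp1 Hp2]. destruct Hq as [Hq1 Hq2]. split.
  - transitivity (mulmx2 n m (kron A B) (kron Ai Bi) p q).
    { rewrite !mulmx2_S2. apply S2_ext. intros x Hx. rewrite HMk; [reflexivity|split|]; auto. }
    rewrite mulmx2_kron. rewrite (proj1 (HA _ _ Hp1 Hq1)), (proj1 (HB _ _ Hp2 Hq2)). reflexivity.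
  - transitivity (mulmx2 n m (kron Ai Bi) (kron A B) p q).
    { rewrite !mulmx2_S2. apply S2_ext. intros x Hx. rewrite HMk; [reflexivity| |split]; auto. }
    rewrite mulmx2_kron. rewrite (proj2 (HA _ _ Hp1 Hq1)), (proj2 (HB _ _ Hp2 Hq2)). reflexivity.
Qed.
Open Scope R_scope.

Definition cont (f : R -> R) := forall x, continuous f x.

Lemma cont_ex_RInt f a b : cont f -> ex_RInt f a b.
Proof. intros Hf. apply (ex_RInt_continuous (V:=R_CompleteNormedModule)). intros; apply Hf. Qed.

Lemma DRInt_eq f a b : cont f -> Defs.RInt f a b = Coquelicot.RInt.RInt f a b.
Proof.
  intros Hf. assert (He : ex_RInt f a b) by (apply cont_ex_RInt; auto).
  pose proof (ex_RInt_Reals_0 _ _ _ He) as pr.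
  rewrite (RInt_Reals f a b pr).
  unfold Defs.RInt.
  destruct (epsilon_spec (inhabits 0) (fun v => exists pr0 : Riemann_integrable f a b, RiemannInt pr0 = v)) as [pr' Hpr'].
  { exists (RiemannInt pr). exists pr. reflexivity. }
  rewrite <- Hpr'. apply RiemannInt_P5.
Qed.

Lemma cont_const c : cont (fun _ => c).
Proof. intros x; apply continuous_const. Qed.
Lemma cont_id : cont (fun x => x).
Proof. intros x; apply continuous_id. Qed.
Lemma cont_plus f g : cont f -> cont g -> cont (fun x => f x + g x).
Proof. intros Hf Hg x. exact (continuous_plus f g x (Hf x) (Hg x)). Qed.
Lemma cont_mult f g : cont f -> cont g -> cont (fun x => f x * g x).
Proof. intros Hf Hg x. exact (continuous_mult f g x (Hf x) (Hg x)). Qed.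
Lemma cont_ext f g : (forall x, f x = g x) -> cont f -> cont g.
Proof. intros H Hf. replace g with f; auto. extensionality x; auto. Qed.
Lemma cont_opp f : cont f -> cont (fun x => - f x).
Proof. intros Hf. apply (cont_ext (fun x => (-1) * f x)). intros; ring.
  apply cont_mult; auto using cont_const. Qed.
Lemma cont_minus f g : cont f -> cont g -> cont (fun x => f x - g x).
Proof. intros Hf Hg. apply (cont_ext (fun x => f x + - g x)). intros; ring.
  apply cont_plus; auto using cont_opp. Qed.
Lemma cont_comp f g : cont f -> cont g -> cont (fun x => g (f x)).
Proof. intros Hf Hg x. apply continuous_comp; auto. Qed.
Lemma cont_pow f k : cont f -> cont (fun x => f x ^ k).
Proof. intros Hf. induction k; simpl. apply cont_const. apply cont_mult; auto. Qed.
Lemma cont_rsum n F : (forall i, (i < n)%nat -> cont (F i)) -> cont (fun x => rsum n (fun i => F i x)).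
Proof. induction n; intros H; simpl. apply cont_const. apply cont_plus; auto. Qed.
Lemma cont_rprod n F : (forall i, (i < n)%nat -> cont (F i)) -> cont (fun x => rprod n (fun i => F i x)).
Proof. induction n; intros H; simpl. apply cont_const. apply cont_mult; auto. Qed.
Lemma cont_abs f : cont f -> cont (fun x => Rabs (f x)).
Proof. intros Hf x. apply continuous_Rabs_comp; auto. Qed.

Lemma DRInt_scal f c a b : cont f -> Defs.RInt (fun x => c * f x) a b = c * Defs.RInt f a b.
Proof. intros Hf. rewrite !DRInt_eq; auto.
  - exact (RInt_scal f a b c (cont_ex_RInt f a b Hf)).
  - apply cont_mult; auto using cont_const. Qed.
Lemma DRInt_plus f g a b : cont f -> cont g ->
  Defs.RInt (fun x => f x + g x) a b = Defs.RInt f a b + Defs.RInt g a b.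
Proof. intros Hf Hg. rewrite !DRInt_eq; auto.
  - exact (RInt_plus f g a b (cont_ex_RInt f a b Hf) (cont_ex_RInt g a b Hg)).
  - apply cont_plus; auto. Qed.
Lemma DRInt_zero a b : Defs.RInt (fun _ => 0) a b = 0.
Proof. rewrite DRInt_eq by apply cont_const. rewrite RInt_const.
  apply (scal_zero_r (K:=R_Ring) (V:=R_ModuleSpace)). Qed.
Lemma DRInt_rsum n F a b : (forall i, (i < n)%nat -> cont (F i)) ->
  Defs.RInt (fun x => rsum n (fun i => F i x)) a b = rsum n (fun i => Defs.RInt (F i) a b).
Proof. induction n; intros H; simpl. apply DRInt_zero.
  assert (H1 : cont (fun x => rsum n (fun i => F i x))) by (apply cont_rsum; intros; apply H; lia).
  assert (H2 : cont (F n)) by (apply H; lia).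
  rewrite (DRInt_plus _ _ _ _ H1 H2). rewrite IHn; auto. Qed.

Lemma cont_delta f x0 eps : cont f -> 0 < eps ->
  exists alp, 0 < alp /\ forall y, Rabs (y - x0) < alp -> Rabs (f y - f x0) < eps.
Proof. intros Hf He.
  assert (Hc : continuity_pt f x0) by (apply continuity_pt_filterlim; apply Hf).
  destruct (Hc eps He) as [alp [Ha Hy]]. exists alp; split; auto.
  intros y Hyx. destruct (Req_dec y x0) as [->|Hne].
  - unfold Rminus; rewrite Rplus_opp_r, Rabs_R0; auto.
  - apply (Hy y). split; [split; [exact I|auto]|]. simpl. unfold R_dist. auto.
Qed.

Lemma pos_int f a b x0 : cont f -> a < b -> (forall x, a <= x <= b -> 0 <= f x) ->
  a <= x0 <= b -> 0 < f x0 -> 0 < Coquelicot.RInt.RInt f a b.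
Proof. intros Hf Hab Hpos Hx0 Hfx0.
  destruct (cont_delta f x0 (f x0) Hf Hfx0) as [alp [Ha Hy]].
  set (x1 := Rmax a (x0 - alp/2)). set (x2 := Rmin b (x0 + alp/2)).
  assert (Hx1 : a <= x1 /\ x0 - alp/2 <= x1 /\ x1 <= x0) by (unfold x1; split; [apply Rmax_l|split; [apply Rmax_r|apply Rmax_lub; lra]]).
  assert (Hx2 : x2 <= b /\ x2 <= x0 + alp/2 /\ x0 <= x2) by (unfold x2; split; [apply Rmin_l|split; [apply Rmin_r|apply Rmin_glb; lra]]).
  assert (Hlt : x1 < x2).
  { unfold x1, x2. unfold Rmax, Rmin. destruct (Rle_dec a (x0 - alp/2)); destruct (Rle_dec b (x0 + alp/2)); lra. }
  assert (E1 := RInt_Chasles f a x1 x2 (cont_ex_RInt _ _ _ Hf) (cont_ex_RInt _ _ _ Hf)).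
  assert (E2 := RInt_Chasles f a x2 b (cont_ex_RInt _ _ _ Hf) (cont_ex_RInt _ _ _ Hf)).
  simpl in E1, E2. unfold plus in E1, E2; simpl in E1, E2.
  rewrite <- E2, <- E1.
  assert (P1 : 0 <= Coquelicot.RInt.RInt f a x1).
  { apply RInt_ge_0. lra. apply cont_ex_RInt; auto. intros x Hx. apply Hpos. lra. }
  assert (P3 : 0 <= Coquelicot.RInt.RInt f x2 b).
  { apply RInt_ge_0. lra. apply cont_ex_RInt; auto. intros x Hx. apply Hpos. lra. }
  assert (P2 : 0 < Coquelicot.RInt.RInt f x1 x2).
  { apply RInt_gt_0. lra. intros x Hx.
    assert (Rabs (f x - f x0) < f x0) by (apply Hy; apply Rabs_def1; lra).
    apply Rabs_def2 in H. lra. intros; apply Hf. }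
  lra.
Qed.

Definition sev (l : list ((R->R)*(R->R))) (r s : R) : R :=
  fold_right (fun fg acc => fst fg r * snd fg s + acc) 0 l.
Definition lcont (l : list ((R->R)*(R->R))) := forall fg, In fg l -> cont (fst fg) /\ cont (snd fg).
Definition sepf (G : R -> R -> R) := exists l, lcont l /\ forall r s, G r s = sev l r s.

Lemma sev_nil r s : sev nil r s = 0.
Proof. reflexivity. Qed.
Lemma sev_cons fg l r s : sev (fg :: l) r s = fst fg r * snd fg s + sev l r s.
Proof. reflexivity. Qed.
Lemma sev_app l1 l2 r s : sev (l1 ++ l2) r s = sev l1 r s + sev l2 r s.
Proof. induction l1. rewrite sev_nil; simpl; ring. rewrite <- app_comm_cons, !sev_cons, IHl1; ring. Qed.
Definition lmul1 (fg : (R->R)*(R->R)) (l : list ((R->R)*(R->R))) :=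
  map (fun fg2 => ((fun r => fst fg r * fst fg2 r), (fun s => snd fg s * snd fg2 s))) l.
Lemma sev_lmul1 fg l r s : sev (lmul1 fg l) r s = fst fg r * snd fg s * sev l r s.
Proof. induction l. unfold lmul1; simpl; unfold sev; simpl; ring.
  unfold lmul1 in *. rewrite map_cons, !sev_cons, IHl. simpl. ring. Qed.
Definition lmul l1 l2 := flat_map (fun fg => lmul1 fg l2) l1.
Lemma sev_lmul l1 l2 r s : sev (lmul l1 l2) r s = sev l1 r s * sev l2 r s.
Proof. induction l1. unfold lmul; simpl; unfold sev; simpl; ring.
  unfold lmul in *. simpl flat_map. rewrite sev_app, sev_lmul1, IHl1, sev_cons. ring. Qed.

Lemma lcont_app l1 l2 : lcont l1 -> lcont l2 -> lcont (l1 ++ l2).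
Proof. intros H1 H2 fg Hin. apply in_app_or in Hin. destruct Hin; auto. Qed.
Lemma lcont_lmul l1 l2 : lcont l1 -> lcont l2 -> lcont (lmul l1 l2).
Proof. intros H1 H2 fg Hin. unfold lmul in Hin. apply in_flat_map in Hin.
  destruct Hin as [fg1 [Hin1 Hin2]]. unfold lmul1 in Hin2. apply in_map_iff in Hin2.
  destruct Hin2 as [fg2 [<- Hin2]]. simpl.
  destruct (H1 _ Hin1), (H2 _ Hin2). split; apply cont_mult; auto. Qed.

Lemma sepf_ext G G' : sepf G -> (forall r s, G' r s = G r s) -> sepf G'.
Proof. intros [l [Hl HG]] H. exists l. split; auto. intros; rewrite H; auto. Qed.
Lemma sepf_plus G1 G2 : sepf G1 -> sepf G2 -> sepf (fun r s => G1 r s + G2 r s).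
Proof. intros [l1 [Hl1 H1]] [l2 [Hl2 H2]]. exists (l1 ++ l2). split. apply lcont_app; auto.
  intros; rewrite sev_app, H1, H2; auto. Qed.
Lemma sepf_mult G1 G2 : sepf G1 -> sepf G2 -> sepf (fun r s => G1 r s * G2 r s).
Proof. intros [l1 [Hl1 H1]] [l2 [Hl2 H2]]. exists (lmul l1 l2). split. apply lcont_lmul; auto.
  intros; rewrite sev_lmul, H1, H2; auto. Qed.
Lemma sepf_sep f g : cont f -> cont g -> sepf (fun r s => f r * g s).
Proof. intros Hf Hg. exists ((f, g) :: nil). split.
  - intros fg [<-|[]]; simpl; auto.
  - intros; simpl; ring. Qed.
Lemma sepf_const c : sepf (fun _ _ => c).
Proof. apply (sepf_ext (fun r s => (fun _ => c) r * (fun _ => 1) s)).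
  apply sepf_sep; apply cont_const. intros; ring. Qed.
Lemma sepf_rsum n F : (forall i, (i < n)%nat -> sepf (F i)) -> sepf (fun r s => rsum n (fun i => F i r s)).
Proof. induction n; intros H; simpl. apply sepf_const.
  apply sepf_plus. apply IHn; intros; apply H; lia. apply H; lia. Qed.

Lemma sepf_cont_s G r : sepf G -> cont (fun s => G r s).
Proof. intros [l [Hl HG]]. apply (cont_ext (fun s => sev l r s)). intros; auto.
  clear HG. induction l; simpl. apply cont_const.
  apply cont_plus. apply cont_mult. apply cont_const. apply (Hl a); simpl; auto.
  apply IHl. intros fg Hin; apply Hl; simpl; auto. Qed.
Lemma sepf_cont_r G s : sepf G -> cont (fun r => G r s).
Proof. intros [l [Hl HG]]. apply (cont_ext (fun r => sev l r s)). intros; auto.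
  clear HG. induction l; simpl. apply cont_const.
  apply cont_plus. apply cont_mult. apply (Hl a); simpl; auto. apply cont_const.
  apply IHl. intros fg Hin; apply Hl; simpl; auto. Qed.

Lemma cont_prim g : cont g -> cont (fun x => Defs.RInt g 0 x).
Proof. intros Hg. apply (cont_ext (fun x => Coquelicot.RInt.RInt g 0 x)).
  intros; rewrite DRInt_eq; auto.
  intros x. apply (continuous_RInt_1 g 0 x (fun z => Coquelicot.RInt.RInt g 0 z)).
  apply filter_forall. intros z. apply (RInt_correct (V:=R_CompleteNormedModule)). apply cont_ex_RInt; auto. Qed.

Lemma sepf_H G : sepf G -> cont (fun r => Defs.RInt (fun s => G r s) 0 (1 - r)).
Proof. intros [l [Hl HG]].
  apply (cont_ext (fun r => fold_right (fun fg acc => fst fg r * Defs.RInt (snd fg) 0 (1 - r) + acc) 0 l)).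
  - intros r. replace (fun s => G r s) with (fun s => sev l r s) by (extensionality s; auto).
    clear HG. induction l; simpl. symmetry; apply DRInt_zero.
    assert (Ha : cont (fst a) /\ cont (snd a)) by (apply Hl; simpl; auto).
    assert (Hl' : lcont l) by (intros fg Hin; apply Hl; simpl; auto).
    rewrite DRInt_plus. rewrite DRInt_scal. rewrite IHl; auto.
    apply Ha. apply cont_mult. apply cont_const. apply Ha.
    apply (sepf_cont_s (sev l) r). exists l; auto.
  - clear HG. induction l; simpl. apply cont_const.
    assert (Ha : cont (fst a) /\ cont (snd a)) by (apply Hl; simpl; auto).
    apply cont_plus. apply cont_mult. apply Ha.
    apply (cont_comp (fun r => 1 - r)). apply cont_minus; [apply cont_const|apply cont_id].
    apply cont_prim; apply Ha.
    apply IHl. intros fg Hin; apply Hl; simpl; auto. Qed.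

Lemma TriInt_scal c G : sepf G -> TriInt (fun r s => c * G r s) = c * TriInt G.
Proof. intros HG. unfold TriInt.
  replace (fun r => Defs.RInt (fun s => c * G r s) 0 (1 - r)) with
          (fun r => c * Defs.RInt (fun s => G r s) 0 (1 - r)).
  - apply DRInt_scal. apply sepf_H; auto.
  - extensionality r. symmetry. apply DRInt_scal. apply sepf_cont_s; auto. Qed.
Lemma TriInt_plus G1 G2 : sepf G1 -> sepf G2 -> TriInt (fun r s => G1 r s + G2 r s) = TriInt G1 + TriInt G2.
Proof. intros H1 H2. unfold TriInt.
  replace (fun r => Defs.RInt (fun s => G1 r s + G2 r s) 0 (1 - r)) with
          (fun r => Defs.RInt (fun s => G1 r s) 0 (1 - r) + Defs.RInt (fun s => G2 r s) 0 (1 - r)).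
  - apply DRInt_plus; apply sepf_H; auto.
  - extensionality r. symmetry. apply DRInt_plus; apply sepf_cont_s; auto. Qed.
Lemma TriInt_zero : TriInt (fun _ _ => 0) = 0.
Proof. unfold TriInt. replace (fun r : R => Defs.RInt (fun _ : R => 0) 0 (1 - r)) with (fun _ : R => 0).
  apply DRInt_zero. extensionality r. symmetry. apply DRInt_zero. Qed.
Lemma TriInt_rsum n F : (forall i, (i < n)%nat -> sepf (F i)) ->
  TriInt (fun r s => rsum n (fun i => F i r s)) = rsum n (fun i => TriInt (F i)).
Proof. induction n; intros H; simpl. apply TriInt_zero.
  assert (H1 : sepf (fun r s => rsum n (fun i => F i r s))) by (apply sepf_rsum; intros; apply H; lia).
  assert (H2 : sepf (F n)) by (apply H; lia).
  rewrite (TriInt_plus _ _ H1 H2). rewrite IHn; auto. Qed.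

Lemma TriInt_pos G r0 s0 : sepf G -> (forall r s, in_tri r s -> 0 <= G r s) ->
  in_tri r0 s0 -> 0 < G r0 s0 -> 0 < TriInt G.
Proof. intros HG Hpos Hin Hg0.
  assert (Hex : exists r1 s1, 0 <= r1 < 1 /\ 0 <= s1 <= 1 - r1 /\ 0 < G r1 s1).
  { destruct Hin as [Hr [Hs Hrs]]. destruct (Rlt_dec r0 1).
    - exists r0, s0. repeat split; lra.
    - assert (r0 = 1) by lra. assert (s0 = 0) by lra. subst.
      destruct (cont_delta (fun r => G r 0) 1 (G 1 0) (sepf_cont_r G 0 HG) Hg0) as [alp [Ha Hy]].
      exists (Rmax 0 (1 - alp/2)), 0.
      assert (H1 : 0 <= Rmax 0 (1 - alp/2)) by apply Rmax_l.
      assert (H2 : 1 - alp/2 <= Rmax 0 (1 - alp/2)) by apply Rmax_r.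
      assert (H3 : Rmax 0 (1 - alp/2) < 1) by (apply Rmax_lub_lt; lra).
      repeat split; try lra.
      assert (Rabs (G (Rmax 0 (1 - alp/2)) 0 - G 1 0) < G 1 0) by (apply Hy; apply Rabs_def1; lra).
      apply Rabs_def2 in H. lra. }
  destruct Hex as [r1 [s1 [Hr1 [Hs1 Hg1]]]].
  unfold TriInt. rewrite DRInt_eq by (apply sepf_H; auto).
  apply (pos_int _ 0 1 r1). apply sepf_H; auto. lra.
  - intros x Hx. rewrite DRInt_eq by (apply sepf_cont_s; auto).
    apply RInt_ge_0. lra. apply cont_ex_RInt. apply sepf_cont_s; auto.
    intros y Hy. apply Hpos. unfold in_tri; lra.
  - lra.
  - rewrite DRInt_eq by (apply sepf_cont_s; auto).
    apply (pos_int _ 0 (1 - r1) s1). apply sepf_cont_s; auto. lra.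
    intros y Hy. apply Hpos. unfold in_tri; lra. lra. auto.
Qed.
Open Scope R_scope.

Definition phic (c : nat -> R) r s t :=
  (1-r-s)*(1-t)*c 1%nat + (r*(1-t)*c 2%nat + (s*(1-t)*c 3%nat + ((1-r-s)*t*c 4%nat + (r*t*c 5%nat + s*t*c 6%nat)))).
Definition dphr (c : nat -> R) t := -(1-t)*c 1%nat + (1-t)*c 2%nat - t*c 4%nat + t*c 5%nat.
Definition dphs (c : nat -> R) t := -(1-t)*c 1%nat + (1-t)*c 3%nat - t*c 4%nat + t*c 6%nat.
Definition dpht (c : nat -> R) r s := -(1-r-s)*c 1%nat - r*c 2%nat - s*c 3%nat + (1-r-s)*c 4%nat + r*c 5%nat + s*c 6%nat.

Lemma der_r c r s t : derivable_pt_lim (fun x => phic c x s t) r (dphr c t).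
Proof. apply is_derive_Reals. unfold phic, dphr. auto_derive; auto. ring. Qed.
Lemma der_s c r s t : derivable_pt_lim (fun x => phic c r x t) s (dphs c t).
Proof. apply is_derive_Reals. unfold phic, dphs. auto_derive; auto. ring. Qed.
Lemma der_t c r s t : derivable_pt_lim (fun x => phic c r s x) t (dpht c r s).
Proof. apply is_derive_Reals. unfold phic, dpht. auto_derive; auto. ring. Qed.
Lemma der_u c a b u t : derivable_pt_lim (fun x => phic c (gam_r a b x) (gam_s a b x) t) u
   (dphr c t * (tri_vr b - tri_vr a) + dphs c t * (tri_vs b - tri_vs a)).
Proof. apply is_derive_Reals. unfold phic, dphr, dphs, gam_r, gam_s. auto_derive; auto. ring. Qed.

Definition cx (nu : nat -> V3) i := vx (nu i).
Definition cy (nu : nat -> V3) i := vy (nu i).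
Definition cz (nu : nat -> V3) i := vz (nu i).

Definition DD nu := (cx nu 2%nat - cx nu 1%nat) * (cy nu 3%nat - cy nu 1%nat) - (cy nu 2%nat - cy nu 1%nat) * (cx nu 3%nat - cx nu 1%nat).
Definition hh nu r s := (1-r-s)*(cz nu 4%nat - cz nu 1%nat) + r*(cz nu 5%nat - cz nu 2%nat) + s*(cz nu 6%nat - cz nu 3%nat).

Lemma Jac_formula nu dr ds dt : vertically_mapped nu -> is_partials nu dr ds dt ->
  forall r s t, Jac dr ds dt r s t = hh nu r s * DD nu.
Proof. intros HV HP r s t. destruct (HP r s t) as [[Hrx [Hry Hrz]] [[Hsx [Hsy Hsz]] [Htx [Hty Htz]]]].
  pose proof (uniqueness_limite _ _ _ _ Hrx (der_r (cx nu) r s t)) as E1.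
  pose proof (uniqueness_limite _ _ _ _ Hry (der_r (cy nu) r s t)) as E2.
  pose proof (uniqueness_limite _ _ _ _ Hrz (der_r (cz nu) r s t)) as E3.
  pose proof (uniqueness_limite _ _ _ _ Hsx (der_s (cx nu) r s t)) as E4.
  pose proof (uniqueness_limite _ _ _ _ Hsy (der_s (cy nu) r s t)) as E5.
  pose proof (uniqueness_limite _ _ _ _ Hsz (der_s (cz nu) r s t)) as E6.
  pose proof (uniqueness_limite _ _ _ _ Htx (der_t (cx nu) r s t)) as E7.
  pose proof (uniqueness_limite _ _ _ _ Hty (der_t (cy nu) r s t)) as E8.
  pose proof (uniqueness_limite _ _ _ _ Htz (der_t (cz nu) r s t)) as E9.
  unfold Jac, det3, dot, cross. simpl.
  rewrite E1, E2, E3, E4, E5, E6, E7, E8, E9.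
  unfold hh, DD, dphr, dphs, dpht, cx, cy, cz. destruct HV as [V1 [V2 [V3 [V4 [V5 V6]]]]].
  rewrite <- V1, <- V2, <- V3, <- V4, <- V5, <- V6. ring.
Qed.

Definition dra a b := tri_vr b - tri_vr a.
Definition dsa a b := tri_vs b - tri_vs a.
Definition xu nu a b := (cx nu 2%nat - cx nu 1%nat) * dra a b + (cx nu 3%nat - cx nu 1%nat) * dsa a b.
Definition yu nu a b := (cy nu 2%nat - cy nu 1%nat) * dra a b + (cy nu 3%nat - cy nu 1%nat) * dsa a b.
Definition hg nu a b u := hh nu (gam_r a b u) (gam_s a b u).

Lemma cross_formula nu a b dXu dXt : vertically_mapped nu -> is_face_partials nu a b dXu dXt ->
  forall u t, cross (dXu u t) (dXt u t) = mkV3 (yu nu a b * hg nu a b u) (- (xu nu a b * hg nu a b u)) 0.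
Proof. intros HV HF u t. destruct (HF u t) as [[Hux [Huy Huz]] [Htx [Hty Htz]]].
  pose proof (uniqueness_limite _ _ _ _ Hux (der_u (cx nu) a b u t)) as E1.
  pose proof (uniqueness_limite _ _ _ _ Huy (der_u (cy nu) a b u t)) as E2.
  pose proof (uniqueness_limite _ _ _ _ Huz (der_u (cz nu) a b u t)) as E3.
  pose proof (uniqueness_limite _ _ _ _ Htx (der_t (cx nu) (gam_r a b u) (gam_s a b u) t)) as E7.
  pose proof (uniqueness_limite _ _ _ _ Hty (der_t (cy nu) (gam_r a b u) (gam_s a b u) t)) as E8.
  pose proof (uniqueness_limite _ _ _ _ Htz (der_t (cz nu) (gam_r a b u) (gam_s a b u) t)) as E9.
  unfold cross. rewrite E1, E2, E3, E7, E8, E9.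
  unfold yu, xu, hg, hh, dra, dsa, dphr, dphs, dpht, cx, cy, cz. destruct HV as [V1 [V2 [V3 [V4 [V5 V6]]]]].
  rewrite <- V1, <- V2, <- V3, <- V4, <- V5, <- V6. f_equal; ring.
Qed.

Lemma face_jac_formula nu a b dXu dXt : vertically_mapped nu -> is_face_partials nu a b dXu dXt ->
  forall u t, face_jac dXu dXt u t = Rabs (hg nu a b u) * sqrt (xu nu a b ^ 2 + yu nu a b ^ 2).
Proof. intros HV HF u t. unfold face_jac, vnorm, dot. rewrite (cross_formula nu a b dXu dXt HV HF u t). simpl.
  replace (yu nu a b * hg nu a b u * (yu nu a b * hg nu a b u) +
     - (xu nu a b * hg nu a b u) * - (xu nu a b * hg nu a b u) + 0 * 0)
   with (Rsqr (hg nu a b u) * (xu nu a b ^ 2 + yu nu a b ^ 2)) by (unfold Rsqr; ring).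
  rewrite sqrt_mult_alt by apply Rle_0_sqr. rewrite sqrt_Rsqr_abs. reflexivity.
Qed.

Lemma Xf_x nu a b u t : vertically_mapped nu ->
  vx (Xf nu a b u t) = cx nu 1%nat + (cx nu 2%nat - cx nu 1%nat) * gam_r a b u + (cx nu 3%nat - cx nu 1%nat) * gam_s a b u.
Proof. intros [V1 [V2 [V3 [V4 [V5 V6]]]]]. unfold Xf, Phi, vadd, vscal, vfun; simpl. unfold cx.
  rewrite <- V1, <- V3, <- V5. ring. Qed.
Lemma Xf_y nu a b u t : vertically_mapped nu ->
  vy (Xf nu a b u t) = cy nu 1%nat + (cy nu 2%nat - cy nu 1%nat) * gam_r a b u + (cy nu 3%nat - cy nu 1%nat) * gam_s a b u.
Proof. intros [V1 [V2 [V3 [V4 [V5 V6]]]]]. unfold Xf, Phi, vadd, vscal, vfun; simpl. unfold cy.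
  rewrite <- V2, <- V4, <- V6. ring. Qed.

Lemma edge_in_tri a b u : (a < 3)%nat -> (b < 3)%nat -> 0 <= u <= 1 -> in_tri (gam_r a b u) (gam_s a b u).
Proof. intros Ha Hb Hu. unfold in_tri, gam_r, gam_s.
  destruct a as [|[|[|a]]]; try lia; destruct b as [|[|[|b]]]; try lia; simpl; lra. Qed.
Lemma edge_dir a b : (a < 3)%nat -> (b < 3)%nat -> a <> b -> dra a b <> 0 \/ dsa a b <> 0.
Proof. intros Ha Hb Hab. unfold dra, dsa.
  destruct a as [|[|[|a]]]; try lia; destruct b as [|[|[|b]]]; try lia; simpl; lra. Qed.
Lemma gam_r_aff a b u : gam_r a b u = gam_r a b 0 + u * dra a b.
Proof. unfold gam_r, dra. ring. Qed.
Lemma gam_s_aff a b u : gam_s a b u = gam_s a b 0 + u * dsa a b.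
Proof. unfold gam_s, dsa. ring. Qed.

Lemma hg_aff nu a b u : hg nu a b u = hg nu a b 0 + u * (hg nu a b 1 - hg nu a b 0).
Proof. unfold hg, hh, gam_r, gam_s. ring. Qed.

Lemma face_geom nu dr ds dt a b dXu dXt :
  vertically_mapped nu -> is_partials nu dr ds dt ->
  (forall r s t, in_wedge r s t -> 0 < Jac dr ds dt r s t) ->
  (a < 3)%nat -> (b < 3)%nat -> a <> b ->
  is_face_partials nu a b dXu dXt ->
  (exists n : V3, vnorm n = 1 /\
     forall u t, 0 <= u <= 1 -> 0 <= t <= 1 ->
       dot (vsub (Xf nu a b u t) (Xf nu a b 0 0)) n = 0 /\
       cross (dXu u t) (dXt u t) = vscal (face_jac dXu dXt u t) n) /\
  (exists c0 c1 : R, forall u t, 0 <= u <= 1 -> 0 <= t <= 1 ->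
       face_jac dXu dXt u t = c0 + c1 * u).
Proof.
  intros HV HP HJp Ha Hb Hab HF.
  pose proof (Jac_formula nu dr ds dt HV HP) as HJ.
  assert (Hpos : forall u, 0 <= u <= 1 -> 0 < hg nu a b u * DD nu).
  { intros u Hu. unfold hg. rewrite <- (HJ _ _ 0). apply HJp. split. apply edge_in_tri; auto. lra. }
  assert (Hsig : exists sg, sg * sg = 1 /\ forall u, 0 <= u <= 1 -> Rabs (hg nu a b u) = sg * hg nu a b u).
  { destruct (Rlt_dec 0 (DD nu)).
    - exists 1. split. ring. intros u Hu. specialize (Hpos u Hu). rewrite Rabs_right. ring. nra.
    - exists (-1). split. ring. intros u Hu. specialize (Hpos u Hu). rewrite Rabs_left. ring. nra. }
  destruct Hsig as [sg [Hsg Habs]].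
  set (X := xu nu a b). set (Y := yu nu a b). set (L := sqrt (X ^ 2 + Y ^ 2)).
  assert (HXY : 0 < X ^ 2 + Y ^ 2).
  { destruct (Rlt_dec 0 (X ^ 2 + Y ^ 2)) as [h|h]; auto. exfalso.
    assert (HX : X = 0) by nra. assert (HY : Y = 0) by nra.
    assert (HD : DD nu <> 0) by (specialize (Hpos 0); intro HD; rewrite HD in Hpos; lra).
    assert (E1 : DD nu * dra a b = (cy nu 3%nat - cy nu 1%nat) * X - (cx nu 3%nat - cx nu 1%nat) * Y)
      by (unfold X, Y, xu, yu, DD; ring).
    assert (E2 : DD nu * dsa a b = - (cy nu 2%nat - cy nu 1%nat) * X + (cx nu 2%nat - cx nu 1%nat) * Y)
      by (unfold X, Y, xu, yu, DD; ring).
    rewrite HX, HY in E1, E2.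
    destruct (edge_dir a b Ha Hb Hab) as [H|H]; apply H.
    - apply (Rmult_eq_reg_l (DD nu)); auto. rewrite E1; ring.
    - apply (Rmult_eq_reg_l (DD nu)); auto. rewrite E2; ring. }
  assert (HL : 0 < L) by (apply sqrt_lt_R0; auto).
  assert (HL2 : L * L = X ^ 2 + Y ^ 2) by (apply sqrt_sqrt; lra).
  assert (HFJ : forall u t, 0 <= u <= 1 -> face_jac dXu dXt u t = sg * hg nu a b u * L).
  { intros u t Hu. rewrite (face_jac_formula nu a b dXu dXt HV HF). rewrite Habs; auto. }
  split.
  - exists (mkV3 (sg * Y / L) (- (sg * X) / L) 0). split.
    + unfold vnorm, dot; simpl.
      replace (sg * Y / L * (sg * Y / L) + - (sg * X) / L * (- (sg * X) / L) + 0 * 0) with 1.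
      apply sqrt_1.
      transitivity ((sg * sg) * ((X ^ 2 + Y ^ 2) / (L * L))).
      rewrite Hsg, HL2. field. lra. field. lra.
    + intros u t Hu Ht. split.
      * unfold dot, vsub. cbn [vx vy vz]. rewrite !Xf_x, !Xf_y by auto.
        rewrite (gam_r_aff a b u), (gam_s_aff a b u). unfold X, Y, xu, yu. field. lra.
      * rewrite (cross_formula nu a b dXu dXt HV HF u t). rewrite HFJ by auto.
        unfold vscal; simpl. fold X Y. f_equal.
        -- transitivity ((sg * sg) * (Y * hg nu a b u)). rewrite Hsg; ring. field; lra.
        -- transitivity ((sg * sg) * (- (X * hg nu a b u))). rewrite Hsg; ring. field; lra.
        -- ring.
  - exists (sg * L * hg nu a b 0), (sg * L * (hg nu a b 1 - hg nu a b 0)).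
    intros u t Hu Ht. rewrite HFJ by auto. rewrite (hg_aff nu a b u). ring.
Qed.

Lemma poly_sepf N g : poly2_deg_le N g -> sepf g.
Proof. intros [c Hc].
  apply (sepf_ext (fun r s => rsum (S N) (fun a => (fun a r s => rsum (S N - a) (fun b => c a b * r ^ a * s ^ b)) a r s))).
  2: intros; rewrite Hc; reflexivity.
  apply sepf_rsum. intros a _.
  apply (sepf_ext (fun r s => rsum (S N - a) (fun b => (fun b r s => (fun r => c a b * r ^ a) r * (fun s => s ^ b) s) b r s))).
  2: intros; reflexivity.
  apply sepf_rsum. intros b _. apply sepf_sep.
  apply cont_mult. apply cont_const. apply cont_pow, cont_id. apply cont_pow, cont_id.
Qed.

Lemma poly_cont2 N g fr fs : poly2_deg_le N g -> cont fr -> cont fs -> cont (fun u => g (fr u) (fs u)).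
Proof. intros [c Hc] Hr Hs.
  apply (cont_ext (fun u => rsum (S N) (fun a => (fun a u => rsum (S N - a) (fun b => (fun b u => c a b * fr u ^ a * fs u ^ b) b u)) a u))).
  intros; rewrite Hc; reflexivity.
  apply cont_rsum. intros a _. apply cont_rsum. intros b _.
  apply cont_mult. apply cont_mult. apply cont_const. apply cont_pow; auto. apply cont_pow; auto.
Qed.

Lemma gam_r_cont a b : cont (gam_r a b).
Proof. unfold gam_r. apply cont_plus. apply cont_const. apply cont_mult. apply cont_id. apply cont_const. Qed.
Lemma gam_s_cont a b : cont (gam_s a b).
Proof. unfold gam_s. apply cont_plus. apply cont_const. apply cont_mult. apply cont_id. apply cont_const. Qed.

Lemma lag_cont N tg j : cont (lag1D N tg j).
Proof. unfold lag1D. apply (cont_rprod (S N) (fun m x => if Nat.eqb m j then 1 else (x - tg m) / (tg j - tg m))).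
  intros m _. destruct (Nat.eqb m j). apply cont_const.
  unfold Rdiv. apply cont_mult. apply cont_minus. apply cont_id. apply cont_const. apply cont_const. Qed.

Lemma J0_sepf nu : sepf (fun r s => hh nu r s * DD nu).
Proof.
  apply (sepf_ext (fun r s => (fun r s => (fun r => (1 - r) * (cz nu 4%nat - cz nu 1%nat) * DD nu + r * (cz nu 5%nat - cz nu 2%nat) * DD nu) r * (fun _ => 1) s) r s
     + (fun r s => (fun _ => 1) r * (fun s => - s * (cz nu 4%nat - cz nu 1%nat) * DD nu + s * (cz nu 6%nat - cz nu 3%nat) * DD nu) s) r s)).
  apply sepf_plus; apply sepf_sep.
  - apply cont_plus; repeat apply cont_mult; try apply cont_const; try apply cont_id. apply cont_minus. apply cont_const. apply cont_id.
  - apply cont_const.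
  - apply cont_const.
  - apply cont_plus; repeat apply cont_mult; try apply cont_const; try apply cont_id. apply cont_opp, cont_id.
  - intros r s. unfold hh. ring.
Qed.

Lemma rprod_one n f : (forall i, (i < n)%nat -> f i = 1) -> rprod n f = 1.
Proof. induction n; intros H; simpl. reflexivity.
  assert (E : rprod n f = 1) by (apply IHn; intros; apply H; lia). rewrite E, (H n) by lia. ring. Qed.
Lemma rprod_zero n f k : (k < n)%nat -> f k = 0 -> rprod n f = 0.
Proof. induction n; intros Hk Hf; simpl. lia. destruct (PeanoNat.Nat.eq_dec k n). subst. rewrite Hf; ring.
  assert (E : rprod n f = 0) by (apply IHn; auto; lia). rewrite E. ring. Qed.

Lemma tg_mono N tg : is_GLL N tg -> forall j k, (j < k)%nat -> (k <= N)%nat -> tg j < tg k.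
Proof. intros [_ [_ [Hm _]]] j k Hjk. induction k. lia. intros HkN.
  destruct (PeanoNat.Nat.eq_dec j k). subst. apply Hm; lia.
  apply Rlt_trans with (tg k). apply IHk; lia. apply Hm; lia. Qed.
Lemma tg_range N tg : is_GLL N tg -> forall k, (k <= N)%nat -> 0 <= tg k <= 1.
Proof. intros HG k Hk. pose proof (tg_mono N tg HG) as Hm. destruct HG as [H0 [H1 _]].
  split.
  - destruct k. rewrite H0; lra. rewrite <- H0. left. apply Hm; lia.
  - destruct (PeanoNat.Nat.eq_dec k N). subst. lra. rewrite <- H1. left. apply Hm; lia. Qed.
Lemma lag_node N tg : is_GLL N tg -> forall j k, (j <= N)%nat -> (k <= N)%nat -> lag1D N tg j (tg k) = idm j k.
Proof. intros HG j k Hj Hk. pose proof (tg_mono N tg HG) as Hm. unfold lag1D, idm.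
  destruct (PeanoNat.Nat.eqb_spec j k).
  - subst. apply rprod_one. intros m Hm'. destruct (PeanoNat.Nat.eqb_spec m k). reflexivity.
    field. intro E. assert (m < k \/ k < m)%nat as [h|h] by lia.
    + specialize (Hm m k h Hk). lra. + specialize (Hm k m h ltac:(lia)). lra.
  - apply (rprod_zero _ _ k). lia. destruct (PeanoNat.Nat.eqb_spec k j). lia.
    unfold Rminus. rewrite Rplus_opp_r. unfold Rdiv. ring.
Qed.
Open Scope R_scope.

Lemma rsum_sq n (x : nat -> R) w :
  rsum n (fun i => rsum n (fun i' => x i * x i' * w)) = rsum n x * rsum n x * w.
Proof.
  transitivity (rsum n (fun i => (x i * w) * rsum n x)).
  - apply rsum_ext; intros i _. rewrite <- rsum_scal_l. apply rsum_ext; intros; ring.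
  - rewrite (rsum_scal_r n (rsum n x) (fun i => x i * w)). rewrite (rsum_scal_r n w x). ring.
Qed.

Lemma M1D_PD N tg : is_GLL N tg -> PD (S N) (M1D N tg).
Proof.
  intros HG c [j0 [Hj0 Hc0]].
  set (L := lag1D N tg).
  assert (HLc : forall j, cont (L j)) by (intros; apply lag_cont).
  assert (E : Defs.RInt (fun t => rsum (S N) (fun j => rsum (S N) (fun j' => (c j * c j') * (L j t * L j' t)))) 0 1
     = rsum (S N) (fun i => rsum (S N) (fun i' => c i * M1D N tg i i' * c i'))).
  { rewrite (DRInt_rsum (S N) (fun j t => rsum (S N) (fun j' => (c j * c j') * (L j t * L j' t)))).
      - apply rsum_ext; intros j _.
        rewrite (DRInt_rsum (S N) (fun j' t => (c j * c j') * (L j t * L j' t))).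
        + apply rsum_ext; intros j' _. rewrite DRInt_scal. unfold M1D. fold L. ring.
          apply cont_mult; auto.
        + intros; apply cont_mult. apply cont_const. apply cont_mult; auto.
      - intros j _. apply cont_rsum. intros; apply cont_mult. apply cont_const. apply cont_mult; auto. }
  rewrite <- E.
  replace (fun t => rsum (S N) (fun j => rsum (S N) (fun j' => (c j * c j') * (L j t * L j' t))))
    with (fun t => rsum (S N) (fun j => c j * L j t) * rsum (S N) (fun j => c j * L j t) * 1).
  2:{ extensionality t. rewrite <- rsum_sq. apply rsum_ext; intros; apply rsum_ext; intros; ring. }
  assert (Hc : cont (fun t => rsum (S N) (fun j => c j * L j t) * rsum (S N) (fun j => c j * L j t) * 1)).
  { apply cont_mult. apply cont_mult; apply cont_rsum; intros; apply cont_mult; auto using cont_const. apply cont_const. }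
  rewrite DRInt_eq by auto.
  apply (pos_int _ 0 1 (tg j0)); auto. lra.
  - intros x _. rewrite Rmult_1_r. apply Rle_0_sqr.
  - apply (tg_range N tg HG); lia.
  - replace (rsum (S N) (fun j => c j * L j (tg j0))) with (c j0).
    rewrite Rmult_1_r. apply Rsqr_pos_lt; auto.
    rewrite <- (rsum_delta_r (S N) j0 c) by auto. apply rsum_ext; intros j Hj.
    unfold L. rewrite lag_node; auto; lia.
Qed.

Lemma Mtri_PD N rn sn ltri J : is_tri_lagrange N rn sn ltri -> sepf (fun r s => J r s 0) ->
  (forall r s, in_tri r s -> 0 < J r s 0) -> PD (Np N) (Mtri ltri J).
Proof.
  intros [Hnodes [Hpoly Hlag]] HJs HJp c [i0 [Hi0 Hc0]].
  set (n := Np N) in *.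
  assert (Hls : forall i, (i < n)%nat -> sepf (ltri i)) by (intros; eapply poly_sepf; eauto).
  assert (HG : forall i i', (i < n)%nat -> (i' < n)%nat -> sepf (fun r s => ltri i r s * ltri i' r s * J r s 0)).
  { intros. apply sepf_mult; auto. apply sepf_mult; auto. }
  assert (E : TriInt (fun r s => rsum n (fun i => rsum n (fun i' => (c i * c i') * (ltri i r s * ltri i' r s * J r s 0))))
     = rsum n (fun i => rsum n (fun i' => c i * Mtri ltri J i i' * c i'))).
  { rewrite (TriInt_rsum n (fun i r s => rsum n (fun i' => (c i * c i') * (ltri i r s * ltri i' r s * J r s 0)))).
    - apply rsum_ext; intros i Hi.
      rewrite (TriInt_rsum n (fun i' r s => (c i * c i') * (ltri i r s * ltri i' r s * J r s 0))).
      + apply rsum_ext; intros i' Hi'. rewrite TriInt_scal by auto. unfold Mtri. ring.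
      + intros i' Hi'. apply (sepf_ext (fun r s => (fun _ _ => c i * c i') r s * (fun r s => ltri i r s * ltri i' r s * J r s 0) r s)).
        apply sepf_mult. apply sepf_const. auto. intros; reflexivity.
    - intros i Hi. apply sepf_rsum. intros i' Hi'.
      apply (sepf_ext (fun r s => (fun _ _ => c i * c i') r s * (fun r s => ltri i r s * ltri i' r s * J r s 0) r s)).
      apply sepf_mult. apply sepf_const. auto. intros; reflexivity. }
  rewrite <- E.
  replace (fun r s => rsum n (fun i => rsum n (fun i' => (c i * c i') * (ltri i r s * ltri i' r s * J r s 0))))
    with (fun r s => rsum n (fun i => c i * ltri i r s) * rsum n (fun i => c i * ltri i r s) * J r s 0).
  2:{ extensionality r. extensionality s. rewrite <- rsum_sq. apply rsum_ext; intros; apply rsum_ext; intros; ring. }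
  assert (HP : sepf (fun r s => rsum n (fun i => c i * ltri i r s))).
  { apply sepf_rsum. intros i Hi.
    apply (sepf_ext (fun r s => (fun _ _ => c i) r s * ltri i r s)). apply sepf_mult. apply sepf_const. auto.
    intros; reflexivity. }
  apply (TriInt_pos _ (rn i0) (sn i0)).
  - apply sepf_mult; auto. apply sepf_mult; auto.
  - intros r s Hrs. apply Rmult_le_pos. apply Rle_0_sqr. left; auto.
  - apply Hnodes; auto.
  - replace (rsum n (fun i => c i * ltri i (rn i0) (sn i0))) with (c i0).
    apply Rmult_lt_0_compat. apply Rsqr_pos_lt; auto. apply HJp. apply Hnodes; auto.
    rewrite <- (rsum_delta_r n i0 c) by auto. apply rsum_ext; intros i Hi.
    rewrite Hlag by auto. unfold idm. reflexivity.
Qed.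

Theorem mainTheorem4
  (N : nat) (nu : nat -> V3) (dr ds dt : R -> R -> R -> V3)
  (rn sn : nat -> R) (ltri : nat -> R -> R -> R) (tg : nat -> R)
  (a b : nat) (dXu dXt : R -> R -> V3) :
  (1 <= N)%nat ->
  vertically_mapped nu ->
  is_partials nu dr ds dt ->
  (forall r s t, in_wedge r s t -> 0 < Jac dr ds dt r s t) ->
  is_tri_lagrange N rn sn ltri ->
  is_GLL N tg ->
  (a < 3)%nat -> (b < 3)%nat -> a <> b ->
  is_face_partials nu a b dXu dXt ->
  (* planarity with constant unit normal *)
  (exists n : V3, vnorm n = 1 /\
     forall u t, 0 <= u <= 1 -> 0 <= t <= 1 ->
       dot (vsub (Xf nu a b u t) (Xf nu a b 0 0)) n = 0 /\
       cross (dXu u t) (dXt u t) = vscal (face_jac dXu dXt u t) n) /\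
  (* J_f independent of t and affine in u *)
  (exists c0 c1 : R, forall u t, 0 <= u <= 1 -> 0 <= t <= 1 ->
       face_jac dXu dXt u t = c0 + c1 * u) /\
  (* tensor-product structure of the face mass matrix *)
  (forall p q, in_range2 (Np N) (S N) p -> in_range2 (Np N) (S N) q ->
       Mface N ltri tg a b (face_jac dXu dXt) p q =
       kron (Medge ltri a b (face_jac dXu dXt)) (M1D N tg) p q) /\
  (* the volume and triangle mass matrices are invertible *)
  (exists Minv, is_inv2 (Np N) (S N) (Mk N ltri tg (Jac dr ds dt)) Minv) /\
  (exists Tinv, is_inv (Np N) (Mtri ltri (Jac dr ds dt)) Tinv) /\
  (* lift matrix *)
  (forall Minv Tinv,
     is_inv2 (Np N) (S N) (Mk N ltri tg (Jac dr ds dt)) Minv ->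
     is_inv (Np N) (Mtri ltri (Jac dr ds dt)) Tinv ->
     forall p q, in_range2 (Np N) (S N) p -> in_range2 (Np N) (S N) q ->
       mulmx2 (Np N) (S N) Minv (Mface N ltri tg a b (face_jac dXu dXt)) p q =
         kron (mulmx (Np N) Tinv (Medge ltri a b (face_jac dXu dXt))) idm p q /\
       (snd p <> snd q ->
         mulmx2 (Np N) (S N) Minv (Mface N ltri tg a b (face_jac dXu dXt)) p q = 0)).
Proof.
  intros HN HV HP HJp HL HG Ha Hb Hab HF.
  pose proof (Jac_formula nu dr ds dt HV HP) as HJ.
  destruct (face_geom nu dr ds dt a b dXu dXt HV HP HJp Ha Hb Hab HF) as [P1 P2].
  pose proof HL as HL'. destruct HL' as [Hnodes [Hpoly Hlag]].
  assert (HJf : forall u t, face_jac dXu dXt u t = face_jac dXu dXt u 0)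
    by (intros; rewrite !(face_jac_formula nu a b dXu dXt HV HF); reflexivity).
  assert (HJfc : cont (fun u => face_jac dXu dXt u 0)).
  { apply (cont_ext (fun u => Rabs (hg nu a b 0 + u * (hg nu a b 1 - hg nu a b 0)) * sqrt (xu nu a b ^ 2 + yu nu a b ^ 2))).
    intros u. rewrite (face_jac_formula nu a b dXu dXt HV HF), <- hg_aff. reflexivity.
    apply cont_mult. apply cont_abs. apply cont_plus. apply cont_const. apply cont_mult. apply cont_id. apply cont_const.
    apply cont_const. }
  assert (Hlc : forall i, (i < Np N)%nat -> cont (fun u => ltri i (gam_r a b u) (gam_s a b u))).
  { intros i Hi. apply (poly_cont2 N). auto. apply gam_r_cont. apply gam_s_cont. }
  assert (HLc : forall j, cont (lag1D N tg j)) by (intros; apply lag_cont).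
  assert (HJ0 : sepf (fun r s => Jac dr ds dt r s 0)).
  { apply (sepf_ext (fun r s => hh nu r s * DD nu)). apply J0_sepf. intros; apply HJ. }
  assert (P3 : forall p q, in_range2 (Np N) (S N) p -> in_range2 (Np N) (S N) q ->
       Mface N ltri tg a b (face_jac dXu dXt) p q =
       kron (Medge ltri a b (face_jac dXu dXt)) (M1D N tg) p q).
  { intros p q [Hp1 Hp2] [Hq1 Hq2]. unfold Mface, kron, Medge, M1D.
    set (K := Defs.RInt (fun u => ltri (fst p) (gam_r a b u) (gam_s a b u) * ltri (fst q) (gam_r a b u) (gam_s a b u) * face_jac dXu dXt u 0) 0 1).
    transitivity (Defs.RInt (fun t => K * (lag1D N tg (snd p) t * lag1D N tg (snd q) t)) 0 1).
    - f_equal. extensionality t. unfold K. rewrite Rmult_comm. rewrite <- DRInt_scal.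
      + f_equal. extensionality u. rewrite (HJf u t). ring.
      + apply cont_mult; auto. apply cont_mult; auto.
    - apply DRInt_scal. apply cont_mult; auto. }
  assert (HMk : forall p q, in_range2 (Np N) (S N) p -> in_range2 (Np N) (S N) q ->
       Mk N ltri tg (Jac dr ds dt) p q = kron (Mtri ltri (Jac dr ds dt)) (M1D N tg) p q).
  { intros p q [Hp1 Hp2] [Hq1 Hq2]. unfold Mk, WedgeInt, kron, Mtri, M1D.
    set (K := TriInt (fun r s => ltri (fst p) r s * ltri (fst q) r s * Jac dr ds dt r s 0)).
    transitivity (Defs.RInt (fun t => K * (lag1D N tg (snd p) t * lag1D N tg (snd q) t)) 0 1).
    - f_equal. extensionality t. unfold K. rewrite Rmult_comm. rewrite <- TriInt_scal.
      + f_equal. extensionality r. extensionality s. rewrite (HJ r s t), (HJ r s 0). ring.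
      + apply sepf_mult; auto. apply sepf_mult; eapply poly_sepf; eauto.
    - apply DRInt_scal. apply cont_mult; auto. }
  assert (HBinv : exists Binv, is_inv (S N) (M1D N tg) Binv) by (apply Bridge.pd_inv; apply M1D_PD; auto).
  assert (HAinv : exists Ainv, is_inv (Np N) (Mtri ltri (Jac dr ds dt)) Ainv).
  { apply Bridge.pd_inv. apply (Mtri_PD N rn sn); auto.
    intros r s Hrs. apply HJp. split; auto. lra. }
  split; [exact P1|]. split; [exact P2|]. split; [exact P3|].
  split; [apply (kron_inv _ _ _ _ _ HMk HAinv HBinv)|]. split; [exact HAinv|].
  intros Minv Tinv HMinv HT p q Hp Hq.
  pose proof (lift_main _ _ _ _ _ _ _ HMk P3 HBinv Minv Tinv HMinv HT p q Hp Hq) as E.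
  split; [exact E|]. intros Hne. rewrite E. unfold kron, idm.
  destruct (PeanoNat.Nat.eqb_spec (snd p) (snd q)); [contradiction|ring].
Qed.
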